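(* Let $\mathbb{F}_q$ be a finite field of characteristic $p$, let $r,v,k,t$ be positive integers, and let $f(x):=x^r h_k(x^v)^t$ where $h_k(x):=x^{k-1}+x^{k-2}+\dots+1$. Let $s:=\gcd(v,q-1)$ and $d:=(q-1)/s$. If $d=1$ then $f$ permutes $\mathbb{F}_q$ if and only if $\gcd(k,p)=\gcd(r,s)=1$. If $d=2$ then $f$ permutes $\mathbb{F}_q$ if and only if $\gcd(k,2p)=\gcd(r,s)=1$ and $k^{st}\equiv (-1)^{r+1}\pmod{p}$.
   Context: A polynomial permutes $\mathbb{F}_q$ if the induced map $\mathbb{F}_q\to\mathbb{F}_q$ is a bijection. *)

(* Defs.v *)
From HB Require Import structures.
From mathcomp Require Import all_boot all_order all_algebra all_field.
Set Implicit Arguments. Unset Strict Implicit. Unset Printing Implicit Defensive.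
Import GRing.Theory.
Local Open Scope ring_scope.

Definition hk (R : nzRingType) (k : nat) : {poly R} := \sum_(i < k) 'X^i.

Definition fpoly (R : comNzRingType) (r v k t : nat) : {poly R} :=
  'X^r * (hk R k \Po 'X^v) ^+ t.

Definition permutes (F : finFieldType) (f : {poly F}) : Prop :=
  bijective (fun x : F => f.[x]).

(* Main.v *)
Require Import Defs.
From HB Require Import structures.
From mathcomp Require Import all_boot all_order all_algebra all_field.
From mathcomp Require Import cyclic.

Set Implicit Arguments. Unset Strict Implicit. Unset Printing Implicit Defensive.
Import GRing.Theory.
Local Open Scope ring_scope.

Lemma aux_unit_pow (F : finFieldType) (x : F) : x != 0 -> x ^+ #|F|.-1 = 1.
Proof.
move=> nz; apply: (mulfI nz); rewrite mulr1 -exprS (ltn_predK (finNzRing_gt1 F)).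
exact: expf_card.
Qed.

Lemma aux_prim (F : finFieldType) : exists w : F, (#|F|.-1).-primitive_root w.
Proof.
have /hasP[w _ pw] : has (#|F|.-1).-primitive_root (enum [pred x : F | x != 0]).
  apply: has_prim_root.
  - by have := finNzRing_gt1 F; case: #|F| => [|[|]].
  - apply/allP => x; rewrite mem_enum inE => nz.
    by rewrite unity_rootE aux_unit_pow.
  - exact: enum_uniq.
  - by rewrite -cardE cardC1.
by exists w.
Qed.

Lemma aux_bez r s : (0 < r)%N -> coprime r s -> exists a b, (1 + a * s = r * b)%N.
Proof.
move=> r0 cop; have [a _ h] := Bezoutl s r0.
rewrite (eqP cop) in h.
by exists a, ((1 + a * s) %/ r)%N; rewrite [RHS]mulnC (divnK h).
Qed.

Lemma aux_inj (F : fieldType) (x y : F) r s : (0 < r)%N -> coprime r s ->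
  x != 0 -> x ^+ s = y ^+ s -> x ^+ r = y ^+ r -> x = y.
Proof.
move=> r0 cop nz hs hr; have [a [b e]] := aux_bez r0 cop.
have H z : z * (z ^+ s) ^+ a = (z ^+ r) ^+ b.
  by rewrite -!exprM -e add1n exprS [(s * a)%N]mulnC.
have nz' : (y ^+ s) ^+ a != 0 by rewrite -hs !expf_neq0.
by apply: (mulIf nz'); rewrite -{1}hs H hr -H.
Qed.

Lemma aux_surj (F : fieldType) (z : F) r s : (0 < r)%N -> coprime r s ->
  z ^+ s = 1 -> exists x, x ^+ s = 1 /\ x ^+ r = z.
Proof.
move=> r0 cop hz; have [a [b e]] := aux_bez r0 cop.
exists (z ^+ b); split; first by rewrite -exprM mulnC exprM hz expr1n.
by rewrite -exprM mulnC -e add1n exprS [(a * s)%N]mulnC exprM hz expr1n mulr1.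
Qed.

Lemma aux_bad (F : fieldType) n (w : F) g m : n.-primitive_root w ->
  (g %| n)%N -> (g %| m)%N -> (1 < g)%N ->
  (w ^+ (n %/ g)) ^+ m = 1 /\ w ^+ (n %/ g) != 1.
Proof.
move=> pw gn gm g1; have n0 := prim_order_gt0 pw; split.
  apply/eqP; rewrite -exprM -(prim_order_dvd pw) -(divnK gm) mulnCA divnK //.
  exact: dvdn_mull.
rewrite -(prim_order_dvd pw); apply/negP => /dvdn_leq.
have hlt : (n %/ g < n)%N := ltn_Pdiv g1 n0.
have hpos : (0 < n %/ g)%N by rewrite divn_gt0 ?(ltnW g1) // (dvdn_leq n0 gn).
by move=> /(_ hpos); rewrite leqNgt hlt.
Qed.

Lemma aux_nz (F : fieldType) (x : F) n : (0 < n)%N -> x ^+ n = 1 -> x != 0.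
Proof.
move=> n0 h; apply/negP => /eqP x0; move: h; rewrite x0 expr0n.
by rewrite (gtn_eqF n0) /= mulr0n => /eqP; rewrite eq_sym oner_eq0.
Qed.

Theorem proposition3p1 (F : finFieldType) (p : nat) (r v k t : nat)
  (hp : p \in [pchar F]%R)
  (hr : (0 < r)%N) (hv : (0 < v)%N) (hk0 : (0 < k)%N) (ht : (0 < t)%N) :
  let q := #|F| in
  let s := gcdn v q.-1 in
  let d := (q.-1 %/ s)%N in
  (d = 1%N ->
     (permutes (fpoly F r v k t) <-> coprime k p /\ coprime r s)) /\
  (d = 2%N ->
     (permutes (fpoly F r v k t) <->
        [/\ coprime k (2 * p), coprime r s &
            ((Posz k) ^+ (s * t) = (-1) ^+ (r + 1) %[mod Posz p])%Z])).
Proof.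
move=> q s d.
have pr := pcharf_prime hp.
have s0 : (0 < s)%N by rewrite gcdn_gt0 hv.
have sv : (s %| v)%N := dvdn_gcdl _ _.
have sn : (s %| q.-1)%N := dvdn_gcdr _ _.
set f := fpoly F r v k t.
have fE x : f.[x] = x ^+ r * (\sum_(i < k) (x ^+ v) ^+ i) ^+ t.
  rewrite /f /fpoly hornerM hornerXn horner_exp horner_comp hornerXn /hk horner_sum.
  by under eq_bigr do rewrite hornerXn.
have xn (x : F) : x != 0 -> x ^+ q.-1 = 1 := @aux_unit_pow F x.
have kE : coprime k p = (k%:R != 0 :> F).
  by rewrite coprime_sym prime_coprime // (dvdn_pcharf hp).
have sum1 : \sum_(i < k) (1 : F) ^+ i = k%:R.
  by rewrite (eq_bigr (fun _ => 1)) ?sumr_const ?card_ord // => i _; rewrite expr1n.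
have summ1 m : \sum_(i < m) (-1 : F) ^+ i = (odd m)%:R.
  elim: m => [|m IH]; first by rewrite big_ord0.
  rewrite big_ord_recr /= IH -signr_odd.
  by case: (odd m); rewrite /= ?expr0 ?expr1 ?addrN ?add0r.
have f0 : f.[0] = 0 by rewrite fE expr0n eqn0Ngt hr mul0r.
have [w pw] := aux_prim F.
have w0 : w != 0 := aux_nz (prim_order_gt0 pw) (prim_expr_order pw).
split.
-
  move=> d1.
  have ns : s = q.-1 by rewrite -(divnK sn) -/d d1 mul1n.
  have xv (x : F) : x != 0 -> x ^+ v = 1.
    by move=> nz; rewrite -(divnK sv) mulnC exprM ns xn // expr1n.
  have fnz (x : F) : x != 0 -> f.[x] = x ^+ r * k%:R ^+ t.
    by move=> nz; rewrite fE xv // sum1.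
  split.
  + move=> /bij_inj inj.
    have kz : k%:R != 0 :> F.
      apply/negP => /eqP kz0.
      have := inj 1 0; rewrite f0 fnz ?oner_neq0 // kz0 expr0n eqn0Ngt ht mulr0.
      by move=> /(_ erefl) /eqP; rewrite oner_eq0.
    split; first by rewrite kE.
    rewrite ns; apply: contraT => ncop.
    have g1 : (1 < gcdn r q.-1)%N.
      by rewrite ltn_neqAle eq_sym ncop gcdn_gt0 hr.
    have [yr y1] := aux_bad pw (dvdn_gcdr _ _) (dvdn_gcdl _ _) g1.
    set y := w ^+ _ in yr y1.
    have y0 : y != 0.
      by apply/negP => /eqP y0; move: yr; rewrite y0 expr0n eqn0Ngt hr => /eqP; rewrite eq_sym oner_eq0.
    have := inj y 1; rewrite !fnz ?oner_neq0 // yr expr1n.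
    by move=> /(_ erefl) /eqP; rewrite (negbTE y1).
  + case=> cop1 cop2; apply: injF_bij => x y.
    have kz : k%:R ^+ t != 0 :> F by rewrite expf_neq0 // -kE.
    case: (eqVneq x 0) => [->|x0]; case: (eqVneq y 0) => [->|y0] //.
    * by rewrite f0 fnz // => /eqP; rewrite eq_sym mulf_eq0 (negbTE kz) expf_eq0 (negbTE y0) andbF.
    * by rewrite f0 fnz // => /eqP; rewrite mulf_eq0 (negbTE kz) expf_eq0 (negbTE x0) andbF.
    * rewrite !fnz // => /(mulIf kz) hrr.
      by apply: (aux_inj hr cop2 x0) => //; rewrite ns !xn.
-
  move=> d2.
  have n2 : q.-1 = (2 * s)%N by rewrite -(divnK sn) -/d d2 mulnC.
  have odd_vs : odd (v %/ s).
    have : gcdn (v %/ s * s) (2 * s) = (1 * s)%N by rewrite divnK // -n2 mul1n.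
    by rewrite -muln_gcdl => /eqP; rewrite eqn_pmul2r // => /eqP h; rewrite -coprimen2 /coprime h.
  have es (x : F) : x != 0 -> (x ^+ s) ^+ 2 = 1 by move=> nz; rewrite -exprM mulnC -n2 xn.
  have esv (x : F) : x != 0 -> x ^+ v = x ^+ s.
    move=> nz; rewrite -(divnK sv) mulnC exprM -(odd_double_half (v %/ s)) odd_vs add1n exprS.
    by rewrite -muln2 mulnC exprM es // expr1n mulr1.
  have e1 (x : F) : x != 0 -> x ^+ s = 1 \/ x ^+ s = -1.
    by move=> nz; have /eqP := es x nz; rewrite sqrf_eq1 => /orP[]/eqP; auto.
  have ws1 : w ^+ s != 1.
    rewrite -(prim_order_dvd pw) n2; apply/negP => /(dvdn_leq s0).
    by rewrite leqNgt -[X in (X < _)%N]mul1n ltn_pmul2r.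
  have ws : w ^+ s = -1 by case: (e1 w w0) => // h; rewrite h eqxx in ws1.
  have m1 : (-1 : F) != 1 by rewrite -ws.
  have sq0 (x : F) : x ^+ s = 1 -> x != 0.
    by move=> h; apply/negP => /eqP x0; move: h; rewrite x0 expr0n eqn0Ngt s0 => /eqP; rewrite eq_sym oner_eq0.
  have fsq (x : F) : x ^+ s = 1 -> f.[x] = x ^+ r * k%:R ^+ t.
    by move=> h; rewrite fE esv ?sq0 // h sum1.
  have fns (x : F) : x != 0 -> x ^+ s = -1 -> f.[x] = x ^+ r * (odd k)%:R ^+ t.
    by move=> nz h; rewrite fE esv // h summ1.
  have cong : ((Posz k) ^+ (s * t) = (-1) ^+ (r + 1) %[mod Posz p])%Z <->
              (k%:R ^+ (s * t) = (-1) ^+ (r + 1) :> F).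
    apply: (iff_trans (rwP eqP)).
    rewrite eqz_mod_dvd (dvdz_pcharf hp) rmorphB /= subr_eq0 rmorphXn /= rmorphXn /= rmorphN1.
    exact: (iff_sym (rwP eqP)).
  have K2 : (k%:R ^+ (s * t) : F) ^+ 2 = 1 \/ k%:R = 0 :> F.
    case: (eqVneq (k%:R : F) 0) => kz; [by right | left].
    by rewrite -exprM mulnC mulnA -n2 exprM xn // expr1n.
  split.
  + move=> /bij_inj inj.
    have kz : k%:R != 0 :> F.
      apply/negP => /eqP kz0.
      have := inj 1 0; rewrite f0 fsq ?expr1n // kz0 expr0n eqn0Ngt ht mulr0.
      by move=> /(_ erefl) /eqP; rewrite oner_eq0.
    have ok : odd k.
      apply: contraT => ek.
      have := inj w 0; rewrite f0 fns // (negbTE ek) expr0n eqn0Ngt ht mulr0.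
      by move=> /(_ erefl) /eqP; rewrite (negbTE w0).
    have cop : coprime r s.
      apply: contraT => ncop.
      have g1 : (1 < gcdn r s)%N by rewrite ltn_neqAle eq_sym ncop gcdn_gt0 hr.
      have gn : (gcdn r s %| q.-1)%N := dvdn_trans (dvdn_gcdr _ _) sn.
      have [yr y1] := aux_bad pw gn (dvdn_gcdl _ _) g1.
      have [ys _] := aux_bad pw gn (dvdn_gcdr _ _) g1.
      set y := w ^+ _ in yr y1 ys.
      have := inj y 1; rewrite !fsq ?ys ?expr1n // yr.
      by move=> /(_ erefl) /eqP; rewrite (negbTE y1).
    split; first by rewrite coprimeMr coprimen2 ok kE.
      exact: cop.
    apply/cong; apply/eqP; apply: contraT => hK.
    have kt : k%:R ^+ t != 0 :> F by rewrite expf_neq0.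
    have KE : k%:R ^+ (s * t) = (-1) ^+ r :> F.
      case: K2 => [/eqP|]; last by move/eqP; rewrite (negbTE kz).
      rewrite sqrf_eq1; move: hK; rewrite addn1 exprS mulN1r -signr_odd.
      by case: (odd r) => /=; rewrite ?expr0 ?expr1 ?opprK => hK /orP[] /eqP h; rewrite h ?eqxx in hK *.
    pose z := w ^+ r / k%:R ^+ t.
    have zs : z ^+ s = 1.
      rewrite /z expr_div_n exprAC ws -exprM mulnC KE divff //.
      by rewrite expf_neq0 // oppr_eq0 oner_neq0.
    have [x [xs xr]] := aux_surj hr cop zs.
    have := inj x w; rewrite fsq // fns // ok expr1n mulr1 xr /z divfK //.
    by move=> /(_ erefl) xw; move: xs; rewrite xw ws => h; rewrite h eqxx in m1.
  + case=> cop1 cop2 /cong hK.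
    rewrite coprimeMr coprimen2 kE in cop1; case/andP: cop1 => ok kz.
    have kt : k%:R ^+ t != 0 :> F by rewrite expf_neq0.
    have key (x : F) : x != 0 -> f.[x] ^+ s = - (-1) ^+ r * x ^+ s.
      move=> nz; case: (e1 x nz) => h.
      * rewrite fsq // exprMn exprAC h expr1n mul1r -exprM mulnC hK addn1 exprS mulr1.
        by rewrite mulN1r.
      * by rewrite fns // ok expr1n mulr1 exprAC h mulrN1 opprK.
    have c0 : - (-1) ^+ r != 0 :> F by rewrite oppr_eq0 signr_eq0.
    have fnz (x : F) : x != 0 -> f.[x] != 0.
      move=> nz; apply/negP => /eqP h0; have := key x nz.
      rewrite h0 expr0n eqn0Ngt s0 /= => /esym/eqP.
      by rewrite mulf_eq0 (negbTE c0) expf_eq0 (negbTE nz) andbF.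
    apply: injF_bij => x y.
    case: (eqVneq x 0) => [->|x0]; case: (eqVneq y 0) => [->|y0] //.
    * by rewrite f0 => /esym/eqP; rewrite (negbTE (fnz y y0)).
    * by rewrite f0 => /eqP; rewrite (negbTE (fnz x x0)).
    * move=> e.
      have hs : x ^+ s = y ^+ s by apply: (mulfI c0); rewrite -!key // e.
      apply: (aux_inj hr cop2 x0 hs).
      case: (e1 x x0) => h.
      - by move: e; rewrite !fsq // -?hs // => /(mulIf kt).
      - by move: e; rewrite !fns // -?hs // ok expr1n !mulr1.
Qed.
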